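(* Suppose $G$ admits a presentation $\langle Z\mid S\rangle$ with all relators of length at most $M$ and satisfying a linear isoperimetric inequality with constant $L$. Then for every $K$ there exist $r$ and $0<\epsilon\le1$ such that the following holds: if $p$ is a geodesic in $\Gamma(G,Z)$, $p_0$ is a subpath of $p$ with $\ell(p_0)>2r$, and $q$ is a path in $\Gamma(G,Z)$ with the same endpoints as $p$ and $\ell(q)\le K\ell(p_0)$, then at least $\epsilon\ell(p_0)$ vertices of $p_0$ lie at distance at most $r$ from points of $q$.
   Context: $\Gamma(G,Z)$ is the Cayley graph with respect to the generating set $Z$ (closed under inverses), with its path metric. The linear isoperimetric inequality with constant $L$ means that every word over $Z$ representing the identity of length $n$ is a product of at most $Ln$ conjugates of relators and their inverses. *)

(* Defs.v *)
(* A possibly infinite group G is given by its carrier and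
   explicit operations with the group axioms; the free group F(Z) is modelled
   by words over signed letters up to free reduction. *)
From Stdlib Require Import Reals List Relations Arith.
Import ListNotations.
Open Scope R_scope.

Record Group (G : Type) := {
  gmul : G -> G -> G;
  ginv : G -> G;
  gone : G;
  gmulA : forall x y z, gmul x (gmul y z) = gmul (gmul x y) z;
  gmul1l : forall x, gmul gone x = x;
  gmul1r : forall x, gmul x gone = x;
  gmulVl : forall x, gmul (ginv x) x = gone;
  gmulVr : forall x, gmul x (ginv x) = gone }.
Arguments gmul {G}. Arguments ginv {G}. Arguments gone {G}.

Section Defs.
Context {G : Type} (grp : Group G).

Definition geval (w : list G) : G := fold_right (gmul grp) (gone grp) w.

Definition letter := (G * bool)%type.
Definition flip (a : letter) : letter := (fst a, negb (snd a)).
Definition finv (w : list letter) : list letter := rev (map flip w).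
Definition embed (w : list G) : list letter := map (fun z => (z, true)) w.
Definition leval (a : letter) : G := if snd a then fst a else ginv grp (fst a).
Definition feval (w : list letter) : G := fold_right (gmul grp) (gone grp) (map leval w).

Inductive freduce : list letter -> list letter -> Prop :=
| freduce_step : forall w1 w2 a, freduce (w1 ++ a :: flip a :: w2) (w1 ++ w2).

Definition free_eq : list letter -> list letter -> Prop :=
  clos_refl_sym_trans _ freduce.

Definition fword (Z : G -> Prop) (w : list letter) : Prop :=
  Forall (fun a => Z (fst a)) w.

Definition conj_word (c : list letter * list G * bool) : list letter :=
  let '(f, R, s) := c in f ++ (if s then embed R else finv (embed R)) ++ finv f.

Definition conj_prod (cs : list (list letter * list G * bool)) : list letter :=
  concat (map conj_word cs).

Definition conj_ok (Z : G -> Prop) (S : list G -> Prop)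
  (c : list letter * list G * bool) : Prop :=
  let '(f, R, _) := c in fword Z f /\ S R.

Definition presentation (Z : G -> Prop) (S : list G -> Prop) : Prop :=
  (forall z, Z z -> Z (ginv grp z)) /\
  (forall R, S R -> Forall Z R) /\
  (forall g, exists w, Forall Z w /\ geval w = g) /\
  (forall w, fword Z w ->
     (feval w = gone grp <->
      exists cs, Forall (conj_ok Z S) cs /\ free_eq w (conj_prod cs))).

Definition lin_isoperimetric (Z : G -> Prop) (S : list G -> Prop) (L : R) : Prop :=
  forall w, Forall Z w -> geval w = gone grp ->
    exists cs, Forall (conj_ok Z S) cs /\
      INR (length cs) <= L * INR (length w) /\
      free_eq (embed w) (conj_prod cs).

(* A path is a start vertex g and a word w over Z; its k-th vertex is
   g * (first k letters of w); its length is length w. *)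
Definition vertex (g : G) (w : list G) (k : nat) : G := gmul grp g (geval (firstn k w)).

Definition dist_le (Z : G -> Prop) (x y : G) (r : nat) : Prop :=
  exists u, Forall Z u /\ (length u <= r)%nat /\ gmul grp x (geval u) = y.

Definition geodesic (Z : G -> Prop) (w : list G) : Prop :=
  forall w', Forall Z w' -> geval w' = geval w -> (length w <= length w')%nat.

End Defs.

(* Main.v *)
Require Import Defs.
From Stdlib Require Import Reals List Arith Lia Lra ClassicalEpsilon Classical Relations.
Import ListNotations.
Open Scope R_scope.

Section Aux.
Context {G : Type} (grp : Group G).
Local Notation gm := (gmul grp).
Local Notation g1 := (gone grp).
Local Notation gi := (ginv grp).
Local Notation gev := (geval grp).

Lemma inv_inv z : gi (gi z) = z.
Proof.
  rewrite <- (gmul1r _ grp (gi (gi z))), <- (gmulVl _ grp z), gmulA, gmulVl, gmul1l.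
  reflexivity.
Qed.

Lemma mul_canc x a b : gm x a = gm x b -> a = b.
Proof.
  intro H. rewrite <- (gmul1l _ grp a), <- (gmul1l _ grp b), <- (gmulVl _ grp x),
    <- !gmulA, H. reflexivity.
Qed.

Lemma mulKr x z : gm (gm x z) (gi z) = x.
Proof. rewrite <- gmulA, gmulVr, gmul1r. reflexivity. Qed.

Lemma mulKl x z : gm (gm x (gi z)) z = x.
Proof. rewrite <- gmulA, gmulVl, gmul1r. reflexivity. Qed.

Lemma geval_cons z v : gev (z :: v) = gm z (gev v).
Proof. reflexivity. Qed.
Lemma geval_nil : gev [] = g1.
Proof. reflexivity. Qed.

Lemma geval_app a b : gev (a ++ b) = gm (gev a) (gev b).
Proof.
  induction a as [|z a IH]. rewrite geval_nil, gmul1l. reflexivity.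
  rewrite <- app_comm_cons, !geval_cons, IH, gmulA. reflexivity.
Qed.

Lemma geval_rinv v : gm (gev v) (gev (rev (map gi v))) = g1.
Proof.
  induction v as [|z v IH]. cbn [map rev]. rewrite geval_nil, gmul1l. reflexivity.
  cbn [map rev]. rewrite geval_app, geval_cons, geval_cons, geval_nil, gmul1r.
  rewrite <- gmulA, (gmulA _ grp (gev v)), IH, gmul1l, gmulVr. reflexivity.
Qed.

Lemma leval_flip a : leval grp (flip a) = gi (leval grp a).
Proof.
  destruct a as [z []]; unfold leval, flip; simpl; [reflexivity|].
  now rewrite inv_inv.
Qed.

Lemma map_leval_embed R0 : map (leval grp) (embed R0) = R0.
Proof. induction R0; simpl; f_equal; auto. Qed.

Lemma map_leval_finv w : map (leval grp) (finv w) = rev (map gi (map (leval grp) w)).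
Proof.
  unfold finv. rewrite map_rev, !map_map. f_equal. apply map_ext.
  intro a. apply leval_flip.
Qed.

Definition F (h1 h2 : G -> nat) (x y : G) : R :=
  (INR (h1 x) + INR (h1 y)) * (INR (h2 y) - INR (h2 x)).

Fixpoint Pg (h1 h2 : G -> nat) (x : G) (v : list G) : R :=
  match v with
  | [] => 0
  | z :: v' => F h1 h2 x (gm x z) + Pg h1 h2 (gm x z) v'
  end.

Lemma Pg_app h1 h2 x a b : Pg h1 h2 x (a ++ b) = Pg h1 h2 x a + Pg h1 h2 (gm x (gev a)) b.
Proof.
  revert x; induction a as [|z a IH]; intro x; cbn [app Pg].
  - rewrite geval_nil, gmul1r; ring.
  - rewrite IH, geval_cons, gmulA. ring.
Qed.

Lemma Pg_red h1 h2 x v1 z v2 :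
  Pg h1 h2 x (v1 ++ z :: gi z :: v2) = Pg h1 h2 x (v1 ++ v2).
Proof.
  rewrite !Pg_app. cbn [Pg]. rewrite mulKr. unfold F. ring.
Qed.

Lemma Pg_rev h1 h2 x v : Pg h1 h2 (gm x (gev v)) (rev (map gi v)) = - Pg h1 h2 x v.
Proof.
  revert x; induction v as [|z v IH]; intro x; cbn [map rev Pg]. ring.
  rewrite Pg_app, !geval_cons.
  rewrite gmulA, IH, <- gmulA, geval_rinv, gmul1r. cbn [Pg]. rewrite mulKr.
  unfold F. ring.
Qed.

Definition lsum (l : list R) : R := fold_right Rplus 0 l.

Lemma lsum_app a b : lsum (a ++ b) = lsum a + lsum b.
Proof. induction a; simpl; [ring| rewrite IHa; ring]. Qed.

Lemma lsum_le (f g : nat -> R) s : (forall k, In k s -> f k <= g k) ->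
  lsum (map f s) <= lsum (map g s).
Proof.
  induction s; simpl; intros H. lra.
  apply Rplus_le_compat; auto.
Qed.

Lemma lsum_nonneg (f : nat -> R) s : (forall k, f k >= 0) -> lsum (map f s) >= 0.
Proof. intro H; induction s; simpl. lra. specialize (H a). lra. Qed.

Lemma Pg_vertex h1 h2 x v : Pg h1 h2 x v =
  lsum (map (fun k => F h1 h2 (vertex grp x v k) (vertex grp x v (S k))) (seq 0 (length v))).
Proof.
  revert x; induction v as [|z v IH]; intro x; cbn [length seq map lsum fold_right Pg]. reflexivity.
  rewrite <- seq_shift, map_map. f_equal.
  - unfold vertex; cbn [firstn]. rewrite geval_cons, !geval_nil, !gmul1r. reflexivity.
  - rewrite IH. unfold lsum. f_equal. apply map_ext. intro k. unfold vertex. cbn [firstn].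
    rewrite !geval_cons, !gmulA. reflexivity.
Qed.

Lemma freduce_Pg h1 h2 v v' : freduce v v' ->
  forall x, Pg h1 h2 x (map (leval grp) v) = Pg h1 h2 x (map (leval grp) v').
Proof.
  intros H x. destruct H as [w1 w2 a]. rewrite !map_app. cbn [map].
  rewrite leval_flip. apply Pg_red.
Qed.

Lemma free_eq_Pg h1 h2 v v' : free_eq v v' ->
  forall x, Pg h1 h2 x (map (leval grp) v) = Pg h1 h2 x (map (leval grp) v').
Proof.
  unfold free_eq. induction 1; intro x0.
  - apply freduce_Pg; auto.
  - reflexivity.
  - symmetry; auto.
  - rewrite IHclos_refl_sym_trans1; auto.
Qed.

Section Lip.
Context (Z : G -> Prop) (h1 h2 : G -> nat).
Context (L1 : forall x z, Z z -> Rabs (INR (h1 (gm x z)) - INR (h1 x)) <= 1).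
Context (L2 : forall x z, Z z -> Rabs (INR (h2 (gm x z)) - INR (h2 x)) <= 1).

Fixpoint Qc (c : R) (x : G) (v : list G) : R :=
  match v with
  | [] => 0
  | z :: v' => (INR (h1 x) + INR (h1 (gm x z)) - 2 * c) * (INR (h2 (gm x z)) - INR (h2 x))
               + Qc c (gm x z) v'
  end.

Lemma Pg_Q c x v : Pg h1 h2 x v = Qc c x v + 2 * c * (INR (h2 (gm x (gev v))) - INR (h2 x)).
Proof.
  revert x; induction v as [|z v IH]; intro x; cbn [Pg Qc].
  - rewrite geval_nil, gmul1r. ring.
  - rewrite IH, geval_cons, gmulA. unfold F. ring.
Qed.

Lemma Q_bound c v : Forall Z v -> forall x D, Rabs (INR (h1 x) - c) <= D ->
  Rabs (Qc c x v) <= INR (length v) * (2 * D + INR (length v)).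
Proof.
  induction 1 as [|z v Hz Hv IH]; intros x D HD; cbn [Qc length].
  - rewrite Rabs_R0. simpl. lra.
  - assert (Hb : Rabs (INR (h1 (gm x z)) - c) <= D + 1).
    { specialize (L1 x z Hz).
      replace (INR (h1 (gm x z)) - c) with ((INR (h1 x) - c) + (INR (h1 (gm x z)) - INR (h1 x))) by ring.
      eapply Rle_trans; [apply Rabs_triang|]. lra. }
    specialize (IH (gm x z) (D + 1) Hb).
    assert (HT : Rabs ((INR (h1 x) + INR (h1 (gm x z)) - 2 * c) * (INR (h2 (gm x z)) - INR (h2 x))) <= 2 * D + 1).
    { rewrite Rabs_mult.
      assert (Ha : Rabs (INR (h1 x) + INR (h1 (gm x z)) - 2 * c) <= 2 * D + 1).
      { replace (INR (h1 x) + INR (h1 (gm x z)) - 2 * c) with ((INR (h1 x) - c) + (INR (h1 (gm x z)) - c)) by ring.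
        eapply Rle_trans; [apply Rabs_triang|]. lra. }
      specialize (L2 x z Hz).
      replace (2 * D + 1) with ((2 * D + 1) * 1) by ring.
      apply Rmult_le_compat; auto using Rabs_pos. }
    eapply Rle_trans; [apply Rabs_triang|]. rewrite S_INR.
    assert (0 <= INR (length v)) by apply pos_INR. nra.
Qed.

Lemma rel_bound (M : nat) R0 y : Forall Z R0 -> (length R0 <= M)%nat -> gev R0 = g1 ->
  Rabs (Pg h1 h2 y R0) <= INR M * INR M.
Proof.
  intros HZ HM Hg. rewrite (Pg_Q (INR (h1 y))), Hg, gmul1r.
  replace (INR (h2 y) - INR (h2 y)) with 0 by ring. rewrite Rmult_0_r, Rplus_0_r.
  eapply Rle_trans. apply (Q_bound _ _ HZ y 0).
  replace (INR (h1 y) - INR (h1 y)) with 0 by ring. rewrite Rabs_R0; lra.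
  apply le_INR in HM. assert (0 <= INR (length R0)) by apply pos_INR. nra.
Qed.

Lemma conj_piece x v e : gev e = g1 ->
  Pg h1 h2 x (v ++ e ++ rev (map gi v)) = Pg h1 h2 (gm x (gev v)) e /\ gev (v ++ e ++ rev (map gi v)) = g1.
Proof.
  intro He. split.
  - rewrite !Pg_app, He, gmul1r, Pg_rev. ring.
  - rewrite !geval_app, He, gmul1l, geval_rinv. reflexivity.
Qed.

Lemma conj_bound (S : list G -> Prop) (M : nat)
  (HS : forall R0, S R0 -> (length R0 <= M)%nat) (HSZ : forall R0, S R0 -> Forall Z R0)
  (Hrel : forall R0, S R0 -> gev R0 = g1) cs :
  Forall (conj_ok Z S) cs -> forall x,
  Rabs (Pg h1 h2 x (map (leval grp) (conj_prod cs))) <= INR (length cs) * (INR M * INR M).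
Proof.
  induction 1 as [|c cs Hc Hcs IH]; intro x.
  - simpl. rewrite Rabs_R0. lra.
  - change (conj_prod (c :: cs)) with (conj_word c ++ conj_prod cs).
    destruct c as [[f R0] s]. destruct Hc as [Hf HR].
    unfold conj_word. rewrite !map_app, map_leval_finv.
    set (e := map (leval grp) (if s then embed R0 else finv (embed R0))).
    assert (He : (gev e = g1) /\ (exists y, Rabs (Pg h1 h2 (gm x (gev (map (leval grp) f))) e) = Rabs (Pg h1 h2 y R0))).
    { subst e. destruct s.
      - rewrite map_leval_embed. split. apply Hrel; auto. eexists; reflexivity.
      - rewrite map_leval_finv, map_leval_embed. split.
        + rewrite <- (gmul1l _ grp (gev (rev (map gi R0)))).
          rewrite <- (Hrel R0 HR) at 1. apply geval_rinv.
        + exists (gm x (gev (map (leval grp) f))).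
          rewrite <- (gmul1r _ grp (gm x (gev (map (leval grp) f)))) at 1.
          rewrite <- (Hrel R0 HR), Pg_rev, Rabs_Ropp. reflexivity. }
    destruct He as [He [y Hy]].
    rewrite Pg_app.
    destruct (conj_piece x (map (leval grp) f) e He) as [P1 P2].
    rewrite P1, P2, gmul1r.
    eapply Rle_trans; [apply Rabs_triang|]. rewrite Hy.
    cbn [length]. rewrite S_INR.
    specialize (IH x). pose proof (rel_bound M R0 y (HSZ R0 HR) (HS R0 HR) (Hrel R0 HR)). lra.
Qed.
End Lip.


Lemma least_ex (P : nat -> Prop) : (exists n, P n) -> exists n, P n /\ forall m, P m -> (n <= m)%nat.
Proof.
  intros [n Hn]. revert Hn. induction n as [n IH] using lt_wf_ind. intro Hn.
  destruct (classic (exists m, (m < n)%nat /\ P m)) as [[m [Hm Pm]]|Hno].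
  - apply (IH m Hm Pm).
  - exists n; split; auto. intros m Pm. destruct (le_lt_dec n m); auto.
    exfalso; apply Hno; eauto.
Qed.

Section Dist.
Context (Z : G -> Prop).
Context (Zinv : forall z, Z z -> Z (gi z)).
Context (Gen : forall g, exists w, Forall Z w /\ gev w = g).

Definition Dl (x y : G) : nat :=
  match excluded_middle_informative
    (exists n, dist_le grp Z x y n /\ forall m, dist_le grp Z x y m -> (n <= m)%nat) with
  | left H => proj1_sig (constructive_indefinite_description _ H)
  | right _ => 0%nat
  end.

Lemma dist_ex x y : exists n, dist_le grp Z x y n.
Proof.
  destruct (Gen (gm (gi x) y)) as [w [Hw Hg]]. exists (length w).
  exists w. repeat split; auto. rewrite Hg, gmulA, gmulVr, gmul1l. reflexivity.
Qed.

Lemma Dl_spec x y : dist_le grp Z x y (Dl x y) /\ forall m, dist_le grp Z x y m -> (Dl x y <= m)%nat.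
Proof.
  unfold Dl. destruct excluded_middle_informative as [H|H].
  - destruct constructive_indefinite_description as [n Hn]. simpl. exact Hn.
  - exfalso. apply H. apply least_ex. apply dist_ex.
Qed.

Lemma Dl_lip x z t : Z z -> (Dl (gm x z) t <= S (Dl x t))%nat /\ (Dl x t <= S (Dl (gm x z) t))%nat.
Proof.
  intro Hz. split.
  - destruct (Dl_spec x t) as [[v [Hv [Hl He]]] _]. apply (proj2 (Dl_spec _ _)).
    exists (gi z :: v). split; [constructor; auto|]. split. simpl; lia.
    rewrite geval_cons, gmulA, mulKr. exact He.
  - destruct (Dl_spec (gm x z) t) as [[v [Hv [Hl He]]] _]. apply (proj2 (Dl_spec _ _)).
    exists (z :: v). split; [constructor; auto|]. split. simpl; lia.
    rewrite geval_cons, gmulA. exact He.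
Qed.

Lemma Dl_refl x : Dl x x = 0%nat.
Proof.
  assert (H : dist_le grp Z x x 0). { exists []. repeat split; auto. rewrite geval_nil, gmul1r. reflexivity. }
  pose proof (proj2 (Dl_spec x x) 0%nat H). lia.
Qed.

Lemma Dl_lip2 t x z : Z z -> (Dl t (gm x z) <= S (Dl t x))%nat /\ (Dl t x <= S (Dl t (gm x z)))%nat.
Proof.
  intro Hz. split.
  - destruct (Dl_spec t x) as [[v [Hv [Hl He]]] _]. apply (proj2 (Dl_spec _ _)).
    exists (v ++ [z]). split. apply Forall_app; split; auto.
    split. rewrite length_app; simpl; lia.
    rewrite geval_app, geval_cons, geval_nil, gmul1r, gmulA, He. reflexivity.
  - destruct (Dl_spec t (gm x z)) as [[v [Hv [Hl He]]] _]. apply (proj2 (Dl_spec _ _)).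
    exists (v ++ [gi z]). split. apply Forall_app; split; auto.
    split. rewrite length_app; simpl; lia.
    rewrite geval_app, geval_cons, geval_nil, gmul1r, gmulA, He, mulKr. reflexivity.
Qed.

Lemma Dl_geod g w k : Forall Z w -> geodesic grp Z w -> (k <= length w)%nat ->
  Dl g (vertex grp g w k) = k.
Proof.
  intros Hw Hg Hk.
  pose proof Hw as Hw'. rewrite <- (firstn_skipn k w) in Hw'. apply Forall_app in Hw'.
  destruct Hw' as [Hf Hs].
  apply Nat.le_antisymm.
  - apply (proj2 (Dl_spec _ _)). exists (firstn k w). repeat split; auto.
    rewrite length_firstn; lia.
  - destruct (Dl_spec g (vertex grp g w k)) as [[v [Hv [Hl He]]] _].
    unfold vertex in He. apply mul_canc in He.
    assert (H := Hg (v ++ skipn k w)).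
    rewrite length_app, length_skipn in H.
    assert (H2 : gev (v ++ skipn k w) = gev w).
    { rewrite geval_app, He, <- geval_app, firstn_skipn. reflexivity. }
    assert (H3 : Forall Z (v ++ skipn k w)) by (apply Forall_app; auto).
    specialize (H H3 H2). lia.
Qed.

Fixpoint md (q : nat -> G) (x : G) (n : nat) : nat :=
  match n with
  | O => Dl x (q O)
  | S n' => Nat.min (md q x n') (Dl x (q (S n')))
  end.

Lemma md_le q x n m : (m <= n)%nat -> (md q x n <= Dl x (q m))%nat.
Proof.
  induction n; intro H; simpl.
  - replace m with O by lia. lia.
  - destruct (Nat.eq_dec m (S n)) as [->|Hne]. lia.
    specialize (IHn ltac:(lia)). lia.
Qed.

Lemma md_wit q x n : exists m, (m <= n)%nat /\ md q x n = Dl x (q m).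
Proof.
  induction n; simpl. exists O; auto.
  destruct IHn as [m [Hm Heq]].
  destruct (le_lt_dec (md q x n) (Dl x (q (S n)))).
  - exists m. split. lia. lia.
  - exists (S n). split. lia. lia.
Qed.

Lemma md_lip q x z n : Z z -> (md q (gm x z) n <= S (md q x n))%nat /\ (md q x n <= S (md q (gm x z) n))%nat.
Proof.
  intro Hz. induction n; simpl.
  - apply Dl_lip; auto.
  - destruct (Dl_lip x z (q (S n)) Hz). lia.
Qed.

Lemma nat_lip_R (h : G -> nat) x y : (h y <= S (h x))%nat -> (h x <= S (h y))%nat ->
  Rabs (INR (h y) - INR (h x)) <= 1.
Proof.
  intros H1 H2. apply le_INR in H1. apply le_INR in H2. rewrite S_INR in H1, H2.
  unfold Rabs; destruct Rcase_abs; lra.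
Qed.

End Dist.

End Aux.

Lemma count_lemma (a : nat -> R) (nb : nat -> bool) (c : R) s :
  (forall k, a k >= 0) -> (forall k, nb k = false -> a k = c) -> c >= 0 ->
  c * (INR (length s) - INR (length (filter nb s))) <= lsum (map a s).
Proof.
  intros Ha Hc Hc0. induction s as [|k s IH]. simpl; lra.
  change (lsum (map a (k :: s))) with (a k + lsum (map a s)). cbn [filter length]. destruct (nb k) eqn:E; cbn [length]; repeat rewrite S_INR.
  - specialize (Ha k).
    replace (c * (INR (length s) + 1 - (INR (length (filter nb s)) + 1)))
      with (c * (INR (length s) - INR (length (filter nb s)))) by ring. lra.
  - rewrite (Hc k E).
    replace (c * (INR (length s) + 1 - INR (length (filter nb s))))
      with (c * (INR (length s) - INR (length (filter nb s))) + c) by ring. lra.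
Qed.

Lemma lsum_sub (a : nat -> R) n i l : (forall k, a k >= 0) -> (i + l <= n)%nat ->
  lsum (map a (seq i l)) <= lsum (map a (seq 0 n)).
Proof.
  intros Ha H. replace n with (i + (l + (n - i - l)))%nat by lia.
  rewrite !seq_app, !map_app, !lsum_app. simpl.
  pose proof (lsum_nonneg a (seq 0 i) Ha). pose proof (lsum_nonneg a (seq (i + l) (n - i - l)) Ha).
  lra.
Qed.

Theorem lemma6p4 (G : Type) (grp : Group G) (Z : G -> Prop) (S : list G -> Prop)
  (M : nat) (L : R) :
  presentation grp Z S ->
  (forall Rl, S Rl -> (length Rl <= M)%nat) ->
  lin_isoperimetric grp Z S L ->
  forall K : R, exists (r : nat) (eps : R), 0 < eps <= 1 /\
    forall (g : G) (w : list G) (i j : nat) (u : list G),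
      Forall Z w -> geodesic grp Z w ->
      (i <= j <= length w)%nat -> (2 * r < j - i)%nat ->
      Forall Z u -> geval grp u = geval grp w ->
      INR (length u) <= K * INR (j - i) ->
      exists ks : list nat, NoDup ks /\
        Forall (fun k => (i <= k <= j)%nat /\
          exists m, (m <= length u)%nat /\
            dist_le grp Z (vertex grp g w k) (vertex grp g u m) r) ks /\
        eps * INR (j - i) <= INR (length ks).
Proof.
  intros HP HM HL K.
  destruct HP as [Zinv [SZ [Gen Ker]]].
  assert (Hrel : forall R0, S R0 -> geval grp R0 = gone grp).
  { intros R0 HR.
    assert (Hf : fword Z (embed R0)).
    { unfold fword, embed. apply Forall_map. eapply Forall_impl; [|apply SZ, HR]. simpl; auto. }
    assert (H : feval grp (embed R0) = gone grp).
    { apply (proj2 (Ker (embed R0) Hf)). exists [([], R0, true)]. split.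
      - constructor; [split; [constructor|exact HR]|constructor].
      - replace (conj_prod [([], R0, true)]) with (embed R0).
        + apply rst_refl.
        + unfold conj_prod. simpl. rewrite !app_nil_r. reflexivity. }
    unfold feval in H. rewrite map_leval_embed in H. exact H. }
  set (C := 2 * (INR M * INR M) * Rabs L * Rabs K).
  destruct (INR_unbounded (2 * C)) as [r Hr].
  exists r, (1/2). split; [lra|].
  intros g w i j u Hw Hgeo Hij Hr2 Hu Heq Hlen.
  set (q := fun m => vertex grp g u m).
  set (N := length u).
  set (h1 := fun x => Nat.min (md grp Z q x N) (Datatypes.S r)).
  set (h2 := fun x => Dl grp Z g x).
  assert (L1 : forall x z, Z z -> Rabs (INR (h1 (gmul grp x z)) - INR (h1 x)) <= 1).
  { intros x z Hz. apply nat_lip_R; unfold h1;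
    destruct (md_lip grp Z Zinv Gen q x z N Hz); lia. }
  assert (L2 : forall x z, Z z -> Rabs (INR (h2 (gmul grp x z)) - INR (h2 x)) <= 1).
  { intros x z Hz. apply nat_lip_R; unfold h2;
    destruct (Dl_lip2 grp Z Zinv Gen g x z Hz); lia. }
  set (nb := fun k => Nat.leb (md grp Z q (vertex grp g w k) N) r).
  set (ks := filter nb (seq i (j - i))).
  exists ks. split; [apply NoDup_filter, seq_NoDup|]. split.
  { apply Forall_forall. intros k Hk. unfold ks in Hk. apply filter_In in Hk.
    destruct Hk as [Hk Hn]. apply in_seq in Hk. split; [lia|].
    unfold nb in Hn. apply Nat.leb_le in Hn.
    destruct (md_wit grp Z q (vertex grp g w k) N) as [m [Hm Hmd]].
    exists m. split; [exact Hm|].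
    destruct (Dl_spec grp Z Gen (vertex grp g w k) (q m)) as [[v [Hv [Hl He]]] _].
    exists v. repeat split; auto. lia. }
  set (gam := w ++ rev (map (ginv grp) u)).
  assert (Hgz : Forall Z gam).
  { unfold gam. apply Forall_app. split; auto. apply Forall_rev. apply Forall_map.
    eapply Forall_impl; [|exact Hu]. auto. }
  assert (Hg1 : geval grp gam = gone grp).
  { unfold gam. rewrite geval_app, <- Heq. apply geval_rinv. }
  destruct (HL gam Hgz Hg1) as [cs [Hcs [Hlcs Hfree]]].
  assert (Hup : Rabs (Pg grp h1 h2 g gam) <= INR (length cs) * (INR M * INR M)).
  { pose proof (free_eq_Pg grp h1 h2 _ _ Hfree g) as E.
    rewrite map_leval_embed in E. rewrite E.
    apply (conj_bound grp Z h1 h2 L1 L2 S M HM SZ Hrel cs Hcs g). }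
  assert (Hsplit : Pg grp h1 h2 g gam = Pg grp h1 h2 g w).
  { unfold gam. rewrite Pg_app, <- Heq, Pg_rev.
    assert (Hu0 : Pg grp h1 h2 g u = 0).
    { rewrite Pg_vertex. transitivity (lsum (map (fun _ => 0) (seq 0 (length u)))).
      - f_equal. apply map_ext_in. intros k Hk. apply in_seq in Hk.
        assert (Z0 : forall m, (m <= N)%nat -> h1 (vertex grp g u m) = 0%nat).
        { intros m Hm. unfold h1. pose proof (md_le grp Z q (vertex grp g u m) N m Hm).
          unfold q in H at 2. rewrite Dl_refl in H by exact Gen. lia. }
        unfold F. rewrite !Z0 by (unfold N; lia). simpl. ring.
      - clear. induction (seq 0 (length u)); simpl; lra. }
    rewrite Hu0. ring. }
  assert (Hlow : (INR r + 1) * (INR (j - i) - INR (length ks)) <= Pg grp h1 h2 g w).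
  { set (a := fun k => INR (h1 (vertex grp g w k))).
    assert (Ha : forall k, a k >= 0) by (intro k; unfold a; apply Rle_ge, pos_INR).
    eapply Rle_trans.
    { replace (INR (j - i)) with (INR (length (seq i (j - i)))) by (rewrite length_seq; reflexivity).
      apply (count_lemma a nb); auto.
      - intros k Hk. unfold a, h1. unfold nb in Hk. apply Nat.leb_gt in Hk.
        replace (Nat.min (md grp Z q (vertex grp g w k) N) (Datatypes.S r)) with (Datatypes.S r) by lia.
        apply S_INR.
      - pose proof (pos_INR r). lra. }
    eapply Rle_trans. apply (lsum_sub a (length w)); auto. lia.
    rewrite Pg_vertex. apply lsum_le. intros k Hk. apply in_seq in Hk.
    unfold F, h2. rewrite !Dl_geod by (auto; lia). rewrite S_INR.
    unfold a. pose proof (Ha (Datatypes.S k)). unfold a in H. lra. }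
  assert (Hwu : (length w <= length u)%nat) by (apply Hgeo; auto).
  assert (Hgl : length gam = (length w + length u)%nat).
  { unfold gam. rewrite length_app, length_rev, length_map. reflexivity. }
  rewrite Hgl, plus_INR in Hlcs.
  apply le_INR in Hwu.
  pose proof (pos_INR (length w)). pose proof (pos_INR (length u)).
  pose proof (pos_INR (j - i)). pose proof (pos_INR (length cs)).
  pose proof (pos_INR M).
  set (l0 := INR (j - i)) in *. set (B := INR (length ks)) in *.
  set (X := INR (length w) + INR (length u)) in *.
  assert (HX : X <= 2 * (Rabs K * l0)).
  { unfold X. pose proof (Rle_abs K). nra. }
  assert (HX0 : 0 <= X) by (unfold X; lra).
  assert (Hcs2 : INR (length cs) <= Rabs L * (2 * (Rabs K * l0))).
  { eapply Rle_trans; [exact Hlcs|]. pose proof (Rle_abs L). pose proof (Rabs_pos L).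
    apply Rle_trans with (Rabs L * X); [nra|]. apply Rmult_le_compat_l; auto. }
  assert (HP0 : Pg grp h1 h2 g w <= C * l0).
  { rewrite <- Hsplit. eapply Rle_trans; [apply Rle_abs|]. eapply Rle_trans; [exact Hup|].
    assert (0 <= INR M * INR M) by (apply Rmult_le_pos; auto).
    apply Rle_trans with (Rabs L * (2 * (Rabs K * l0)) * (INR M * INR M)).
    - apply Rmult_le_compat_r; auto.
    - unfold C. right; ring. }
  assert (HC0 : 0 <= C).
  { unfold C. repeat apply Rmult_le_pos; try lra; auto using Rabs_pos. }
  assert (H5 : C * l0 <= (INR r + 1) / 2 * l0) by (apply Rmult_le_compat_r; lra).
  destruct (Rle_lt_dec (l0 / 2) B) as [Hok|Hbad]; [lra|]. exfalso.
  assert (0 < (INR r + 1) * (l0 / 2 - B)) by (apply Rmult_lt_0_compat; pose proof (pos_INR r); lra).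
  lra.
Qed.
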